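(* Let $p$ be an odd prime and let $X$ be a finite family of $4p-3$ lattice points in $\mathbb{Z}^2$ (repetitions allowed). If $(p,X)=0$, then $(p-1,X)\equiv(3p-1,X) \pmod p$.
   Context: For a finite family $X$ of lattice points in $\mathbb{Z}^2$ (points may repeat; subsets are subfamilies, i.e. subsets of the index set) and an integer $n\ge 0$, $(n,X)$ denotes the number of $n$-element subfamilies of $X$ whose coordinatewise sum is congruent to $(0,0)$ modulo $p$. *)

(* Defs.v *)
From mathcomp Require Import all_boot all_order all_algebra.
Set Implicit Arguments. Unset Strict Implicit. Unset Printing Implicit Defensive.
Import GRing.Theory Num.Theory.
Local Open Scope ring_scope.

(* A finite family of N lattice points in Z^2 is X : 'I_N -> int * int
   (repetitions allowed). Subfamilies are subsets of the index set 'I_N.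
   count_zs p n X = (n, X) : the number of n-element subfamilies whose
   coordinatewise sum is congruent to (0,0) modulo p. *)
Definition count_zs (p n N : nat) (X : 'I_N -> int * int) : nat :=
  #|[set S : {set 'I_N} | (#|S| == n)%N
       && ((p%:Z %| \sum_(i in S) (X i).1)%Z
       && (p%:Z %| \sum_(i in S) (X i).2)%Z)]|.

(* Main.v *)
Require Import Defs.
From mathcomp Require Import all_boot all_order all_algebra.
From mathcomp Require Import finfield ring zify.
Set Implicit Arguments. Unset Strict Implicit. Unset Printing Implicit Defensive.
Import GRing.Theory Num.Theory.
Local Open Scope ring_scope.

Lemma alt_base (I : finType) (Y T : {set I}) :
  (#|T| < #|Y|)%N ->
  \sum_(S : {set I} | S \subset Y) (-1) ^+ #|S| * ((T \subset S)%:R : int) = 0.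
Proof.
move=> lt.
have /set0Pn [j]: Y :\: T != set0.
  apply/negP; rewrite setD_eq0 => /subset_leq_card; by rewrite leqNgt lt.
rewrite inE => /andP [jT jY].
pose h (S : {set I}) := if j \in S then S :\ j else j |: S.
have hK : involutive h.
  move=> S; rewrite /h; case: (boolP (j \in S)) => jS.
    by rewrite setD11 setD1K.
  by rewrite setU11 setU1K.
pose F := fun S : {set I} => (-1) ^+ #|S| * ((T \subset S)%:R : int).
have Fh : forall S, F (h S) = - F S.
  move=> S; rewrite /F /h; case: (boolP (j \in S)) => jS.
  - rewrite [in RHS](cardsD1 j S) jS add1n exprS mulN1r mulNr.
    by rewrite subsetD1 jT andbT opprK.
  - rewrite cardsU1 jS add1n exprS mulN1r mulNr; congr (- (_ * _%:R)); congr (nat_of_bool _).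
    apply/idP/idP => [/subsetP H|H]; last exact: subset_trans H (subsetUr _ _).
    apply/subsetP => x xT; have := H x xT; rewrite !inE; case/orP => // /eqP xj.
    by rewrite -xj xT in jT.
have hY : forall S, (h S \subset Y) = (S \subset Y).
  move=> S; rewrite /h; case: (boolP (j \in S)) => jS.
  - apply/idP/idP => H.
      by rewrite -(setD1K jS) subUset sub1set jY H.
    exact: subset_trans (subD1set _ _) H.
  - by rewrite subUset sub1set jY.
have e : \sum_(S : {set I} | S \subset Y) F S = - \sum_(S : {set I} | S \subset Y) F S.
  rewrite {1}(@reindex_inj _ _ _ _ h (fun S => S \subset Y) F (inv_inj hK)) /= -sumrN.
  apply: eq_big => S; [exact: hY | move=> _; exact: Fh].
change (\sum_(S : {set I} | S \subset Y) F S = 0).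
move: e; set s := \sum_(S : {set I} | S \subset Y) F S; lia.
Qed.

Definition Lf (I : finType) (c : I -> int) (S : {set I}) : int := \sum_(i in S) c i.
Definition Pl (I : finType) (ls : seq (I -> int)) (S : {set I}) : int :=
  \prod_(c <- ls) Lf c S.

Lemma alt_list (I : finType) (Y : {set I}) (ls : seq (I -> int)) (T : {set I}) :
  (#|T| + size ls < #|Y|)%N ->
  \sum_(S : {set I} | S \subset Y) (-1) ^+ #|S| * ((T \subset S)%:R * Pl ls S) = 0.
Proof.
elim: ls T => [|c ls IH] T /=.
  rewrite addn0 => lt; rewrite -[RHS](alt_base lt); apply: eq_bigr => S _.
  by rewrite /Pl big_nil mulr1.
move=> lt.
have step : forall S : {set I}, (T \subset S)%:R * Pl (c :: ls) S =
   \sum_i c i * (((i |: T) \subset S)%:R * Pl ls S).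
  move=> S; rewrite /Pl big_cons /Lf big_mkcond /= mulr_suml mulr_sumr.
  apply: eq_bigr => i _; case: (boolP (i \in S)) => iS.
    rewrite subUset sub1set iS /=; ring.
  by rewrite subUset sub1set (negbTE iS) /= !mul0r !mulr0.
rewrite (eq_bigr (fun S : {set I} => \sum_i (-1) ^+ #|S| * (c i * ((i |: T \subset S)%:R * Pl ls S)))); last by move=> S _; rewrite step mulr_sumr.
rewrite exchange_big /=; apply: big1 => i _.
rewrite (eq_bigr (fun S : {set I} => c i * ((-1) ^+ #|S| * ((i |: T \subset S)%:R * Pl ls S)))); last by move=> S _; ring.
rewrite -mulr_sumr IH ?mulr0 //.
rewrite cardsU1; move: lt; case: (i \notin T) => /=; lia.
Qed.

Lemma alt_comb (I : finType) (Y : {set I}) (L : seq (int * seq (I -> int))) :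
  all (fun k => (size k.2 < #|Y|)%N) L ->
  \sum_(S : {set I} | S \subset Y) (-1) ^+ #|S| * \sum_(k <- L) k.1 * Pl k.2 S = 0.
Proof.
elim: L => [|k L IH].
  by move=> _; rewrite big1 // => S _; rewrite big_nil mulr0.
rewrite [all _ _]/= => /andP [hk hL].
rewrite (eq_bigr (fun S : {set I} => k.1 * ((-1) ^+ #|S| * ((set0 \subset S)%:R * Pl k.2 S)) + (-1) ^+ #|S| * \sum_(k <- L) k.1 * Pl k.2 S)); last first.
  by move=> S _; rewrite big_cons sub0set /=; ring.
rewrite big_split /= IH // -mulr_sumr alt_list ?mulr0 ?addr0 // cards0 add0n //.
Qed.

Lemma Pl_nseq (I : finType) (n : nat) (f : I -> int) S : Pl (nseq n f) S = Lf f S ^+ n.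
Proof. by elim: n => [|n IH]; rewrite /Pl ?big_nil ?expr0 // big_cons -/(Pl _ _) IH exprS. Qed.

Lemma Pl_cat (I : finType) l1 l2 (S : {set I}) : Pl (l1 ++ l2) S = Pl l1 S * Pl l2 S.
Proof. by rewrite /Pl big_cat. Qed.

Lemma Pl_nil (I : finType) (S : {set I}) : Pl [::] S = 1.
Proof. by rewrite /Pl big_nil. Qed.

Definition zs (p : nat) (I : finType) (X : I -> int * int) (S : {set I}) : bool :=
  (p%:Z %| \sum_(i in S) (X i).1)%Z && (p%:Z %| \sum_(i in S) (X i).2)%Z.

Lemma fermat_int (p : nat) (hp : prime p) (z : int) :
  1 - (z%:~R : 'F_p) ^+ p.-1 = ((p%:Z %| z)%Z)%:R.
Proof.
rewrite (dvdz_pcharf (pchar_Fp hp)).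
have p1 : (0 < p.-1)%N by rewrite -subn1 subn_gt0 prime_gt1.
case: eqP => [-> | nz]; first by rewrite expr0n eqn0Ngt p1 /= subr0.
have e := expf_card (z%:~R : 'F_p); rewrite card_Fp // in e.
have e2 : (z%:~R : 'F_p) ^+ (p.-1).+1 = z%:~R by rewrite prednK ?prime_gt0.
rewrite exprS in e2.
have -> : (z%:~R : 'F_p) ^+ p.-1 = 1.
  by apply: (mulfI (x := z%:~R)); [apply/eqP | rewrite e2 mulr1].
by rewrite subrr.
Qed.

Lemma KL (p : nat) (hp : prime p) (I : finType) (X : I -> int * int) (Y : {set I}) :
  (3 * p.-1 < #|Y|)%N ->
  \sum_(S : {set I} | S \subset Y) (-1) ^+ #|S| *
      ((zs p X S && (p %| #|S|)%N)%:R : 'F_p) = 0.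
Proof.
move=> hY.
set q := p.-1.
pose fa i := (X i).1. pose fb i := (X i).2. pose f1 := fun _ : I => (1 : int).
pose A := nseq q fa. pose B := nseq q fb. pose C := nseq q f1.
pose Lg : seq (int * seq (I -> int)) := [:: (1, [::]); (-1, A); (-1, B); (-1, C);
   (1, A ++ B); (1, A ++ C); (1, B ++ C); (-1, A ++ B ++ C)].
have hall : all (fun k => (size k.2 < #|Y|)%N) Lg.
  rewrite /= !size_cat !size_nseq; move: hY; rewrite -/q => hY.
  repeat (apply/andP; split); lia.
have H0 := alt_comb hall.
have G : forall S : {set I}, \sum_(k <- Lg) k.1 * Pl k.2 S =
   (1 - Lf fa S ^+ q) * (1 - Lf fb S ^+ q) * (1 - Lf f1 S ^+ q).
  move=> S; rewrite !big_cons big_nil /= !Pl_cat !Pl_nseq Pl_nil; ring.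
have H1 : ((\sum_(S : {set I} | S \subset Y) (-1) ^+ #|S| * \sum_(k <- Lg) k.1 * Pl k.2 S) %:~R : 'F_p) = 0.
  by rewrite H0.
rewrite -[RHS]H1 rmorph_sum; apply: eq_bigr => S _.
rewrite G !rmorphM rmorphXn rmorphN1 !rmorphB rmorph1 !rmorphXn.
rewrite !fermat_int //.
have -> : Lf f1 S = #|S|%:Z by rewrite /Lf sumr_const natz.
rewrite /zs /Lf /fa /fb.
congr (_ * _); rewrite (_ : (p %| #|S|%:Z)%Z = (p %| #|S|)%N) //.
by case: (_ %| \sum_(i in S) (X i).1)%Z; case: (_ %| \sum_(i in S) (X i).2)%Z; case: (p %| #|S|)%N; rewrite /= ?mul1r ?mul0r ?mulr0.
Qed.

Lemma zsE (p : nat) (hp : prime p) (I : finType) (X : I -> int * int) (S : {set I}) :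
  zs p X S = (\sum_(i in S) ((X i).1)%:~R == 0 :> 'F_p) &&
             (\sum_(i in S) ((X i).2)%:~R == 0 :> 'F_p).
Proof.
by rewrite /zs !(dvdz_pcharf (pchar_Fp hp)) !rmorph_sum.
Qed.

Lemma sum_split (R : nmodType) (I : finType) (Y S : {set I}) (g : I -> R) :
  S \subset Y -> \sum_(i in Y) g i = \sum_(i in S) g i + \sum_(i in Y :\: S) g i.
Proof. by move=> sSY; rewrite (big_setID S) (setIidPr sSY). Qed.

Lemma zs_sub1 (p : nat) (hp : prime p) (I : finType) (X : I -> int * int) (Y S : {set I}) :
  S \subset Y -> zs p X S -> zs p X Y = zs p X (Y :\: S).
Proof.
move=> sSY; rewrite !zsE // !(sum_split _ sSY) => /andP [/eqP -> /eqP ->].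
by rewrite !add0r.
Qed.

Lemma zs_sub2 (p : nat) (hp : prime p) (I : finType) (X : I -> int * int) (Y S : {set I}) :
  S \subset Y -> zs p X Y -> zs p X S = zs p X (Y :\: S).
Proof.
move=> sSY; rewrite !zsE // !(sum_split _ sSY) !addr_eq0 => /andP [/eqP -> /eqP ->].
by rewrite !oppr_eq0.
Qed.

Lemma zs0 (p : nat) (I : finType) (X : I -> int * int) : zs p X set0.
Proof. by rewrite /zs !big_set0 !dvdz0. Qed.

Lemma L2 (p : nat) (hp : prime p) (I : finType) (X : I -> int * int) (Y : {set I}) :
  (3 * p.-1 < #|Y|)%N -> (#|Y| < 3 * p)%N ->
  (forall S : {set I}, S \subset Y -> #|S| = p -> zs p X S = false) ->
  (p %| (#|[set T : {set I} | (T \subset Y) && ((#|T| == 2 * p)%N && zs p X T)]|).+1)%N.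
Proof.
move=> h1 h2 hno.
set B := [set T | _].
have K := KL hp X h1.
rewrite -[X in (_ %| X)%N]addn1 (dvdn_pcharf (pchar_Fp hp)) natrD addrC; apply/eqP; rewrite -[RHS]K.
rewrite (bigD1 set0) ?sub0set //.
rewrite cards0 expr0 mul1r zs0 dvdn0 /=; congr (_ + _).
have p0 := prime_gt0 hp.
rewrite (eq_bigr (fun S : {set I} => if S \in B then 1 else 0)); last first.
  move=> S /andP [sSY nS0]; rewrite inE sSY /=.
  case zS: (zs p X S); rewrite ?andbF ?mulr0 //=.
  case: (boolP (p %| #|S|)%N) => hd.
    move/dvdnP: hd => [k hk].
    have hk3 : (k < 3)%N.
      by rewrite -(ltn_pmul2r p0) -hk (leq_ltn_trans (subset_leq_card sSY) h2).
    case: k hk hk3 => [|[|[|k]]] hk hk3 //.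
    - by move: nS0; rewrite -cards_eq0 hk.
    - by move: zS; rewrite hno // hk mul1n.
    - by rewrite hk eqxx exprM sqrrN !expr1n mulr1.
  case: eqP => e; last by rewrite mulr0.
  by rewrite e dvdn_mull in hd.
rewrite -big_mkcondr /=.
rewrite (eq_bigl (fun S : {set I} => S \in B)); last first.
  move=> S; rewrite andbC; case: (boolP (S \in B)) => //=.
  rewrite inE => /andP [sY /andP [/eqP c _]]; rewrite sY /=; apply/eqP => e.
  move: c; rewrite e cards0; lia.
by rewrite sumr_const.
Qed.

Local Close Scope ring_scope.

Lemma card_bij (T U : finType) (A : {set T}) (B : {set U}) (f : T -> U) (g : U -> T) :
  {in A, forall x, f x \in B} -> {in B, forall y, g y \in A} ->
  {in A, cancel f g} -> {in B, cancel g f} -> #|A| = #|B|.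
Proof.
move=> fAB gBA fK gK; rewrite -(card_in_imset (can_in_inj fK)).
have -> : f @: A = B; last by [].
apply/setP => y; apply/imsetP/idP => [[x xA ->]|yB]; first exact: fAB.
by exists (g y); [exact: gBA | rewrite gK].
Qed.

Lemma setDDsub (I : finType) (Y S : {set I}) : S \subset Y -> Y :\: (Y :\: S) = S.
Proof.
move/subsetP=> h; apply/setP => x; rewrite !inE.
case xS: (x \in S); rewrite /= ?andbF ?andbT; [by rewrite (h x) ?xS | by rewrite andNb].
Qed.

Lemma setDUsub (I : finType) (Y S : {set I}) : S \subset Y -> (Y :\: S) :|: S = Y.
Proof.
move/subsetP=> h; apply/setP => x; rewrite !inE.
case xS: (x \in S); rewrite /= ?orbT ?orbF //; by rewrite (h x) ?xS.
Qed.

Lemma setUDsub (I : finType) (T S : {set I}) : T \subset ~: S -> (T :|: S) :\: S = T.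
Proof.
move/subsetP=> h; apply/setP => x; rewrite !inE.
case xS: (x \in S); rewrite /= ?orbT ?orbF //.
apply/esym/negbTE/negP => xT; have := h x xT; by rewrite inE xS.
Qed.

Theorem mainTheorem6 (p : nat) (hp : prime p) (hodd : odd p)
  (X : 'I_(4 * p - 3) -> int * int) :
  count_zs p p X = 0%N ->
  count_zs p (p - 1) X = count_zs p (3 * p - 1) X %[mod p].
Proof.
move=> H0.
have p0 := prime_gt0 hp.
have p3 : (2 < p)%N.
  have : p != 2 by apply/eqP => e; rewrite e in hodd.
  have := prime_gt1 hp; lia.
have hno : forall S : {set 'I_(4 * p - 3)}, #|S| = p -> zs p X S = false.
  move=> S hS; apply/negbTE/negP => zS.
  move: H0; rewrite /count_zs => /eqP; rewrite cards_eq0 => /eqP /setP /(_ S).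
  by rewrite !inE hS eqxx /=; move: zS; rewrite /zs => ->.
pose A1 := [set S : {set 'I_(4 * p - 3)} | (#|S| == p - 1) && zs p X S].
pose A3 := [set S : {set 'I_(4 * p - 3)} | (#|S| == 3 * p - 1) && zs p X S].
change (#|A1| = #|A3| %[mod p]).
pose B2 (Y : {set 'I_(4 * p - 3)}) :=
  [set T : {set 'I_(4 * p - 3)} | (T \subset Y) && ((#|T| == 2 * p)%N && zs p X T)].
have step1 : forall Y, Y \in A3 -> #|[set S in A1 | S \subset Y]| = #|B2 Y|.
  move=> Y; rewrite inE => /andP [/eqP cY zY].
  apply: (@card_bij _ _ _ _ (fun S => Y :\: S) (fun T => Y :\: T)).
  - move=> S; rewrite !inE => /andP [/andP [/eqP cS zS] sSY].
    rewrite subsetDl /= cardsD (setIidPr sSY) cY cS -(zs_sub2 hp sSY zY) zS andbT.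
    apply/eqP; lia.
  - move=> T; rewrite !inE => /andP [sTY /andP [/eqP cT zT]].
    rewrite subsetDl andbT cardsD (setIidPr sTY) cY cT -(zs_sub2 hp sTY zY) zT andbT.
    apply/eqP; lia.
  - move=> S; rewrite !inE => /andP [_ sSY]; exact: setDDsub.
  - move=> T; rewrite !inE => /andP [sTY _]; exact: setDDsub.
have step2 : forall S, S \in A1 -> #|[set Y in A3 | S \subset Y]| = #|B2 (~: S)|.
  move=> S; rewrite inE => /andP [/eqP cS zS].
  apply: (@card_bij _ _ _ _ (fun Y => Y :\: S) (fun T => T :|: S)).
  - move=> Y; rewrite !inE => /andP [/andP [/eqP cY zY] sSY].
    rewrite setDE subsetIr /= -setDE cardsD (setIidPr sSY) cY cS -(zs_sub1 hp sSY zS) zY andbT.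
    apply/eqP; lia.
  - move=> T; rewrite !inE => /andP [sTC /andP [/eqP cT zT]].
    have sS : S \subset T :|: S by exact: subsetUr.
    have dis : T :&: S = set0.
      apply/setP => x; rewrite !inE; case xS: (x \in S); rewrite ?andbF ?andbT //.
      apply/negbTE/negP => xT; have := subsetP sTC x xT; by rewrite inE xS.
    rewrite sS andbT cardsU dis cards0 subn0 cT cS (zs_sub1 hp sS zS) setUDsub // zT andbT.
    apply/eqP; lia.
  - move=> Y; rewrite !inE => /andP [_ sSY]; exact: setDUsub.
  - move=> T; rewrite !inE => /andP [sTC _]; exact: setUDsub.
have step3 : \sum_(Y in A3) #|[set S in A1 | S \subset Y]| =
             \sum_(S in A1) #|[set Y in A3 | S \subset Y]|.
  have e1 : forall Y : {set 'I_(4 * p - 3)},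
      #|[set S in A1 | S \subset Y]| = \sum_(S in A1 | S \subset Y) 1.
    by move=> Y; rewrite -sum1_card; apply: eq_bigl => S; rewrite inE.
  have e2 : forall S : {set 'I_(4 * p - 3)},
      #|[set Y in A3 | S \subset Y]| = \sum_(Y in A3 | S \subset Y) 1.
    by move=> S; rewrite -sum1_card; apply: eq_bigl => Y; rewrite inE.
  rewrite (eq_bigr _ (fun Y _ => e1 Y)) (eq_bigr _ (fun S _ => e2 S)).
  rewrite (exchange_big_dep (fun S => S \in A1)); last by move=> Y S _ /andP [].
  apply: eq_bigr => S SA1; apply: eq_bigl => Y; by rewrite SA1.
have h3 : (p %| \sum_(Y in A3) #|B2 Y| + #|A3|)%N.
  rewrite -sum1_card -big_split; apply: dvdn_sum => Y; rewrite inE => /andP [/eqP cY _].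
  change (p %| #|B2 Y| + 1)%N; rewrite addn1; apply: L2 => //; first by rewrite cY; lia.
    by rewrite cY; lia.
  by move=> S _; exact: hno.
have h1 : (p %| \sum_(S in A1) #|B2 (~: S)| + #|A1|)%N.
  rewrite -sum1_card -big_split; apply: dvdn_sum => S; rewrite inE => /andP [/eqP cS _].
  have cC : #|~: S| = (3 * p - 2)%N.
    by have := cardsC S; rewrite card_ord cS; lia.
  change (p %| #|B2 (~: S)| + 1)%N; rewrite addn1; apply: L2 => //; first by rewrite cC; lia.
    by rewrite cC; lia.
  by move=> T _; exact: hno.
have eC : \sum_(Y in A3) #|B2 Y| = \sum_(S in A1) #|B2 (~: S)|.
  transitivity (\sum_(Y in A3) #|[set S in A1 | S \subset Y]|).
    by apply/esym/eq_bigr => Y YA; exact: step1.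
  by rewrite step3; apply: eq_bigr => S SA; exact: step2.
rewrite eC in h3.
move: h1 h3; rewrite /dvdn; move=> /eqP e1 /eqP e3.
set K := \sum_(S in A1) _ in e1 e3.
apply/eqP; rewrite -(eqn_modDl K) e1 e3.
done.
Qed.
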